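(* Let $\mathcal{X}\subseteq\mathbb{R}^d$ be nonempty, closed and convex, and let $f=\frac1n\sum_{i=1}^nf_i$ with each $f_i:\mathbb{R}^d\to\mathbb{R}$ convex and differentiable. Assume $x_\star\in\operatorname{arg\,min}_{x\in\mathcal{X}}f(x)$ exists and each $f_i$ has a constrained minimizer $x_{\star,i}\in\operatorname{arg\,min}_{x\in\mathcal{X}}f_i(x)$; let $f_i^\star:=f_i(x_{\star,i})$ and $D:=\max_{1\le i\le n}\|x_{\star,i}-x_\star\|$. Assume $\|\nabla f_i(x)\|\le G$ for all $i$ and all $x\in\mathcal{X}$. Let $x_0\in\mathcal{X}$ and generate $\{x_k\}$ by sampling $i_k$ uniformly from $\{1,\dots,n\}$ independently of the past, setting $g_{i_k}=\nabla f_{i_k}(x_k)$, $t_k:=\frac{f_{i_k}(x_k)-f_{i_k}^\star}{\|g_{i_k}\|}$ if $g_{i_k}\ne0$ and $t_k:=0$ if $g_{i_k}=0$, and $x_{k+1}\in\operatorname{arg\,min}_{z\in\mathcal{X}\cap\mathcal{B}(x_k,t_k)}\langle g_{i_k},z\rangle$. Then for every $\eta\in(0,1)$ and $K\ge1$, $$\frac1K\sum_{k=0}^{K-1}\mathbb{E}\big[(f(x_k)-f(x_\star))^2\big]\le\frac{G^2\|x_0-x_\star\|^2}{(1-\eta)K}+\frac{G^2D^2}{\eta(1-\eta)},$$ and for $\hat x_K:=\frac1K\sum_{k=0}^{K-1}x_k$, $\mathbb{E}[f(\hat x_K)-f(x_\star)]\le\sqrt{\frac{G^2\|x_0-x_\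star\|^2}{(1-\eta)K}+\frac{G^2D^2}{\eta(1-\eta)}}$.
   Context: $\|\cdot\|$ is the Euclidean norm, $\mathcal{B}(x,t):=\{y:\|y-x\|\le t\}$. *)

(* Defs.v *)
From HB Require Import structures.
From mathcomp Require Import all_boot all_order all_algebra.
From mathcomp Require Import all_classical all_reals all_analysis.
Set Implicit Arguments. Unset Strict Implicit. Unset Printing Implicit Defensive.
Import Order.TTheory GRing.Theory Num.Theory.
Import numFieldNormedType.Exports.
Local Open Scope classical_set_scope.
Local Open Scope ring_scope.

Definition dotp (R : realType) (d : nat) (u v : 'rV[R]_d) : R := (u *m v^T) 0 0.
Definition enorm (R : realType) (d : nat) (u : 'rV[R]_d) : R := Num.sqrt (dotp u u).

Definition eball (R : realType) (d : nat) (x : 'rV[R]_d) (t : R) : set 'rV[R]_d :=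
  [set y | enorm (y - x) <= t].

Definition convex_set_rV (R : realType) (d : nat) (X : set 'rV[R]_d) : Prop :=
  forall x y (a : R), X x -> X y -> 0 <= a <= 1 -> X (a *: x + (1 - a) *: y).

Definition convex_fun_rV (R : realType) (d : nat) (f : 'rV[R]_d -> R) : Prop :=
  forall x y (a : R), 0 <= a <= 1 ->
    f (a *: x + (1 - a) *: y) <= a * f x + (1 - a) * f y.

Definition is_gradient (R : realType) (d : nat) (f : 'rV[R]_d -> R)
  (g : 'rV[R]_d -> 'rV[R]_d) : Prop :=
  forall x, differentiable f x /\ ('d f x : 'rV[R]_d -> R) = (fun v => dotp (g x) v).

Definition is_argmin (R : realType) (d : nat) (h : 'rV[R]_d -> R) (S : set 'rV[R]_d)
  (x : 'rV[R]_d) : Prop :=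
  S x /\ forall y, S y -> h x <= h y.

Definition avgf (R : realType) (d n : nat) (fs : 'I_n -> 'rV[R]_d -> R) (x : 'rV[R]_d) : R :=
  n%:R^-1 * \sum_(i < n) fs i x.

Definition step_size (R : realType) (d n : nat) (fs : 'I_n -> 'rV[R]_d -> R)
  (gs : 'I_n -> 'rV[R]_d -> 'rV[R]_d) (xsi : 'I_n -> 'rV[R]_d) (i : 'I_n)
  (x : 'rV[R]_d) : R :=
  if gs i x == 0 then 0 else (fs i x - fs i (xsi i)) / enorm (gs i x).

(* A run of the algorithm: the iterate after the index history s = [i_0;...;i_{k-1}]
   is traj s. *)
Definition valid_run (R : realType) (d n : nat) (X : set 'rV[R]_d)
  (fs : 'I_n -> 'rV[R]_d -> R) (gs : 'I_n -> 'rV[R]_d -> 'rV[R]_d)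
  (xsi : 'I_n -> 'rV[R]_d) (x0 : 'rV[R]_d) (traj : seq 'I_n -> 'rV[R]_d) : Prop :=
  traj [::] = x0 /\
  forall (s : seq 'I_n) (i : 'I_n),
    is_argmin (fun z => dotp (gs i (traj s)) z)
      (X `&` eball (traj s) (step_size fs gs xsi i (traj s)))
      (traj (rcons s i)).

(* Expectation of a function of the first k sampled indices, when the indices
   are i.i.d. uniform on 'I_n: average over all k-tuples. *)
Definition expect_hist (R : realType) (n k : nat) (h : seq 'I_n -> R) : R :=
  (n ^ k)%:R^-1 * \sum_(s : k.-tuple 'I_n) h (tval s).

Definition avg_iterate (R : realType) (d n : nat) (traj : seq 'I_n -> 'rV[R]_d)
  (K : nat) (s : seq 'I_n) : 'rV[R]_d :=
  K%:R^-1 *: \sum_(k < K) traj (take k s).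

(* Main.v *)
Require Import Defs.
From HB Require Import structures.
From mathcomp Require Import all_boot all_order all_algebra.
From mathcomp Require Import all_classical all_reals all_analysis.
From mathcomp Require Import ring lra.
Import Order.TTheory GRing.Theory Num.Theory.
Import numFieldNormedType.Exports.
Local Open Scope classical_set_scope.
Local Open Scope ring_scope.

Set Implicit Arguments. Unset Strict Implicit.


Lemma dotpE {R : realType} {d : nat} (u : 'rV[R]_d) (v : 'rV[R]_d) : dotp u v = \sum_j u 0 j * v 0 j.
Proof. by rewrite /dotp !mxE; apply: eq_bigr => j _; rewrite mxE. Qed.

Lemma dotpC {R : realType} {d : nat} (u : 'rV[R]_d) (v : 'rV[R]_d) : dotp u v = dotp v u.
Proof. by rewrite !dotpE; apply: eq_bigr => j _; rewrite mulrC. Qed.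

Lemma dotpDl {R : realType} {d : nat} (u : 'rV[R]_d) (v : 'rV[R]_d) (w : 'rV[R]_d) : dotp (u + v) w = dotp u w + dotp v w.
Proof. by rewrite !dotpE -big_split; apply: eq_bigr => j _; rewrite mxE mulrDl. Qed.

Lemma dotpZl {R : realType} {d : nat} (a : R) (u : 'rV[R]_d) (w : 'rV[R]_d) : dotp (a *: u) w = a * dotp u w.
Proof. by rewrite !dotpE mulr_sumr; apply: eq_bigr => j _; rewrite mxE mulrA. Qed.

Lemma dotpNl {R : realType} {d : nat} (u : 'rV[R]_d) (w : 'rV[R]_d) : dotp (- u) w = - dotp u w.
Proof. by rewrite -scaleN1r dotpZl mulN1r. Qed.

Lemma dotpBl {R : realType} {d : nat} (u : 'rV[R]_d) (v : 'rV[R]_d) (w : 'rV[R]_d) : dotp (u - v) w = dotp u w - dotp v w.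
Proof. by rewrite dotpDl dotpNl. Qed.

Lemma dotpDr {R : realType} {d : nat} (u : 'rV[R]_d) (v : 'rV[R]_d) (w : 'rV[R]_d) : dotp w (u + v) = dotp w u + dotp w v.
Proof. by rewrite dotpC dotpDl !(dotpC w). Qed.

Lemma dotpZr {R : realType} {d : nat} (a : R) (u : 'rV[R]_d) (w : 'rV[R]_d) : dotp w (a *: u) = a * dotp w u.
Proof. by rewrite dotpC dotpZl dotpC. Qed.

Lemma dotpNr {R : realType} {d : nat} (u : 'rV[R]_d) (w : 'rV[R]_d) : dotp w (- u) = - dotp w u.
Proof. by rewrite dotpC dotpNl dotpC. Qed.

Lemma dotpBr {R : realType} {d : nat} (u : 'rV[R]_d) (v : 'rV[R]_d) (w : 'rV[R]_d) : dotp w (u - v) = dotp w u - dotp w v.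
Proof. by rewrite dotpDr dotpNr. Qed.

Lemma dotp0l {R : realType} {d : nat} (w : 'rV[R]_d) : dotp 0 w = 0.
Proof. by rewrite -(scale0r 0) dotpZl mul0r. Qed.

Lemma dotp_ge0 {R : realType} {d : nat} (u : 'rV[R]_d) : 0 <= dotp u u.
Proof. by rewrite dotpE; apply: sumr_ge0 => j _; rewrite -expr2 sqr_ge0. Qed.

Lemma dotp_le0 {R : realType} {d : nat} (u : 'rV[R]_d) : dotp u u <= 0 -> u = 0.
Proof.
move=> H; have H0 : dotp u u = 0 by apply/eqP; rewrite eq_le H dotp_ge0.
move: H0; rewrite dotpE => /psumr_eq0P H1.
apply/matrixP => i j; rewrite (ord1 i) mxE.
have := H1 (fun k _ => ltac:(rewrite -expr2; exact: sqr_ge0)) j isT.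
by rewrite -expr2 => /eqP; rewrite sqrf_eq0 => /eqP.
Qed.

Lemma enorm_ge0 {R : realType} {d : nat} (u : 'rV[R]_d) : 0 <= enorm u.
Proof. exact: sqrtr_ge0. Qed.

Lemma enorm_sq {R : realType} {d : nat} (u : 'rV[R]_d) : enorm u ^+ 2 = dotp u u.
Proof. by rewrite /enorm sqr_sqrtr // dotp_ge0. Qed.

Lemma enorm_le {R : realType} {d : nat} (u : 'rV[R]_d) (t : R) : enorm u <= t -> dotp u u <= t ^+ 2.
Proof.
move=> H; have e0 := enorm_ge0 u.
rewrite -enorm_sq; apply: lerXn2r => //; rewrite ?nnegrE //; exact: le_trans H.
Qed.

Lemma le_enorm {R : realType} {d : nat} (u : 'rV[R]_d) (t : R) : 0 <= t -> dotp u u <= t ^+ 2 -> enorm u <= t.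
Proof.
move=> t0 H; rewrite /enorm -(ger0_norm t0) -sqrtr_sqr.
by rewrite ler_sqrt // sqr_ge0.
Qed.

Lemma enorm_eq0 {R : realType} {d : nat} (u : 'rV[R]_d) : enorm u = 0 -> u = 0.
Proof. by move=> H; apply: dotp_le0; rewrite -enorm_sq H expr0n. Qed.


Lemma dotp_sq (R : realType) d (a b : 'rV[R]_d) (s : R) :
  dotp (a + s *: b) (a + s *: b) = dotp a a + 2 * s * dotp a b + s ^+ 2 * dotp b b.
Proof.
rewrite dotpDl dotpDr dotpDr !dotpZl !dotpZr (dotpC b a); ring.
Qed.
Lemma key (R : realType) d (X : set 'rV[R]_d) (x y z g : 'rV[R]_d) (t c ng : R) :
  convex_set_rV X -> X y -> X z -> 0 <= c -> 0 <= ng -> c * ng = t ->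
  ng ^+ 2 = dotp g g ->
  dotp (z - x) (z - x) <= t ^+ 2 ->
  (forall w, X w -> enorm (w - x) <= t -> dotp g z <= dotp g w) ->
  t * ng <= dotp g (x - y) ->
  t ^+ 2 <= 2 * dotp (z - x) (y - z) + dotp (z - x) (z - x).
Proof.
move=> cX Xy Xz c0 ng0 ct ngE uu zmin gxy.
have t0 : 0 <= t by rewrite -ct mulr_ge0.
have xyE : x - y = - (z - x) - (y - z).
  by apply/matrixP => i j; rewrite !mxE; ring.
rewrite xyE dotpBr dotpNr in gxy.
have vv0 := dotp_ge0 (y - z).
case: (lerP (t ^+ 2) (2 * dotp (z - x) (y - z) + dotp (z - x) (z - x))) => // H.
exfalso.
pose de := t ^+ 2 - dotp (z - x) (z - x) - 2 * dotp (z - x) (y - z).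
have de0 : 0 < de by rewrite /de; lra.
pose s := de / (dotp (y - z) (y - z) + de).
have q0 : 0 < dotp (y - z) (y - z) + de by lra.
have s0 : 0 < s by rewrite /s divr_gt0.
have s1 : s <= 1 by rewrite /s ler_pdivrMr // mul1r; lra.
have sq : s * dotp (y - z) (y - z) <= de.
  by rewrite /s mulrAC ler_pdivrMr //; nra.
have se : s * (2 * dotp (z - x) (y - z)) + s ^+ 2 * dotp (y - z) (y - z)
           <= t ^+ 2 - dotp (z - x) (z - x).
  have : s * (2 * dotp (z - x) (y - z) + s * dotp (y - z) (y - z))
          <= s * (t ^+ 2 - dotp (z - x) (z - x)).
    by rewrite ler_pM2l //; rewrite /de in sq; lra.
  have : 0 <= (1 - s) * (t ^+ 2 - dotp (z - x) (z - x)) by apply: mulr_ge0; lra.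
  nra.
pose w := s *: y + (1 - s) *: z.
have Xw : X w by apply: cX => //; rewrite (ltW s0) s1.
have wE : w - x = (z - x) + s *: (y - z).
  by apply/matrixP => i j; rewrite /w !mxE; ring.
have wz : w = z + s *: (y - z).
  by apply/matrixP => i j; rewrite /w !mxE; ring.
have := zmin w Xw.
rewrite wE le_enorm //; last first.
  rewrite dotp_sq; nra.
rewrite wz dotpDr dotpZr => /(_ isT) gv.
have gv0 : 0 <= dotp g (y - z) by rewrite -(pmulr_rge0 _ s0); lra.
have uc : z - x + c *: g = 0.
  apply: dotp_le0.
  rewrite dotp_sq -ngE (dotpC _ g).
  have : c * (t * ng) <= c * (- dotp (z - x) g).
    by apply: ler_wpM2l => //; rewrite (dotpC _ g); lra.
  nra.
have ue : z - x = - c *: g.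
  by apply/matrixP => i j; move/matrixP: uc => /(_ i j); rewrite !mxE => h0; lra.
move: H gxy; rewrite ue !dotpZl !dotpZr -ngE -ct.
have : c * dotp g (y - z) >= 0 by apply: mulr_ge0.
nra.
Qed.


Lemma sum_rcons (T : finType) (i0 : T) (R : realType) k (h : seq T -> R) :
  \sum_(t : k.+1.-tuple T) h t = \sum_(t : k.-tuple T) \sum_(i : T) h (rcons t i).
Proof.
rewrite pair_big /=.
rewrite (reindex (fun p : k.-tuple T * T => [tuple of rcons p.1 p.2])) /=; last first.
  exists (fun t : k.+1.-tuple T =>
            ([tuple of belast (head i0 t) (behead t)], last (head i0 t) (behead t))).
    move=> [s i] _ /=; congr pair; last first.
      by case: s => [[|a s'] sz] //=; rewrite last_rcons.
    apply: val_inj => /=; case: s => [[|a s'] sz] //=.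
    by rewrite belast_rcons.
  move=> t _; apply: val_inj => /=; case: t => [[|a s'] sz] //=.
  by rewrite -lastI.
by [].
Qed.

Lemma sum_sq (R : realType) (I : finType) (a : I -> R) : (0 < #|I|)%N ->
  (\sum_i a i) ^+ 2 <= #|I|%:R * \sum_i a i ^+ 2.
Proof.
move=> I0.
set S := \sum_i a i; set N : R := #|I|%:R.
have N0 : 0 < N by rewrite /N ltr0n.
have H : 0 <= \sum_i (N * a i - S) ^+ 2 by apply: sumr_ge0 => i _; exact: sqr_ge0.
have E : \sum_i (N * a i - S) ^+ 2 = N ^+ 2 * \sum_i a i ^+ 2 - N * S ^+ 2.
  rewrite (eq_bigr (fun i => (N ^+ 2 * a i ^+ 2 + (- (2 * N * S)) * a i) + S ^+ 2)); last first.
    by move=> i _; ring.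
  rewrite big_split big_split /= -!mulr_sumr -/S sumr_const -/N -mulr_natr -/N; ring.
rewrite E in H.
have : 0 <= N * (N * \sum_i a i ^+ 2 - S ^+ 2) by rewrite mulrBr mulrA -expr2.
by rewrite pmulr_rge0 // subr_ge0.
Qed.

Lemma avg_sq (R : realType) (I : finType) (a : I -> R) : (0 < #|I|)%N ->
  (#|I|%:R^-1 * \sum_i a i) ^+ 2 <= #|I|%:R^-1 * \sum_i a i ^+ 2.
Proof.
move=> I0; have N0 : 0 < (#|I|%:R : R) by rewrite ltr0n.
rewrite exprMn expr2 -mulrA ler_pM2l ?invr_gt0 //.
rewrite mulrC ler_pdivrMr // mulrC. exact: sum_sq.
Qed.


Lemma card_tup n k : #|{: k.-tuple 'I_n}| = (n ^ k)%N.
Proof. by rewrite card_tuple card_ord. Qed.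

Lemma E_ext (R : realType) n k (h1 h2 : seq 'I_n -> R) :
  (forall t : k.-tuple 'I_n, h1 t = h2 t) -> expect_hist k h1 = expect_hist k h2.
Proof. by move=> H; rewrite /expect_hist; congr (_ * _); apply: eq_bigr => t _. Qed.

Lemma E_le (R : realType) n k (h1 h2 : seq 'I_n -> R) :
  (forall t : k.-tuple 'I_n, h1 t <= h2 t) -> expect_hist k h1 <= expect_hist k h2.
Proof.
move=> H; rewrite /expect_hist; apply: ler_wpM2l; first by rewrite invr_ge0.
by apply: ler_sum => t _.
Qed.

Lemma E_ge0 (R : realType) n k (h : seq 'I_n -> R) :
  (forall t : k.-tuple 'I_n, 0 <= h t) -> 0 <= expect_hist k h.
Proof.
move=> H; rewrite /expect_hist; apply: mulr_ge0; first by rewrite invr_ge0.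
by apply: sumr_ge0 => t _.
Qed.

Lemma E_add (R : realType) n k (h1 h2 : seq 'I_n -> R) :
  expect_hist k (fun s => h1 s + h2 s) = expect_hist k h1 + expect_hist k h2.
Proof. by rewrite /expect_hist big_split mulrDr. Qed.

Lemma E_scale (R : realType) n k (a : R) (h : seq 'I_n -> R) :
  expect_hist k (fun s => a * h s) = a * expect_hist k h.
Proof. by rewrite /expect_hist -mulr_sumr mulrCA. Qed.

Lemma E_const (R : realType) n k (c : R) : (0 < n)%N ->
  expect_hist k (fun _ : seq 'I_n => c) = c.
Proof.
move=> n0; rewrite /expect_hist sumr_const cardT -cardE card_tuple card_ord -[c *+ _]mulr_natl mulrA mulVf ?mul1r //.
by rewrite pnatr_eq0 -lt0n expn_gt0 n0.
Qed.

Lemma E_rcons (R : realType) n k (h : seq 'I_n -> R) : (0 < n)%N ->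
  expect_hist k.+1 h = expect_hist k (fun s => n%:R^-1 * \sum_(i < n) h (rcons s i)).
Proof.
move=> n0; rewrite /expect_hist (sum_rcons (Ordinal n0)) -mulr_sumr expnS natrM invfM.
by rewrite mulrA [_^-1 * _^-1]mulrC.
Qed.

Lemma E_nil (R : realType) n (h : seq 'I_n -> R) : (0 < n)%N ->
  expect_hist 0 h = h [::].
Proof.
move=> n0; rewrite (@E_ext _ _ _ h (fun _ => h [::])) ?E_const //.
by move=> t; rewrite (size0nil (size_tuple t)).
Qed.

Lemma E_take (R : realType) n k j (h : seq 'I_n -> R) : (0 < n)%N ->
  expect_hist (k + j) (fun s => h (take k s)) = expect_hist k h.
Proof.
move=> n0; elim: j => [|j IH].
  by rewrite addn0; apply: E_ext => t; rewrite take_oversize // size_tuple.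
rewrite addnS E_rcons // -IH; apply: E_ext => t.
rewrite (eq_bigr (fun _ => h (take k t))); last first.
  by move=> i _; rewrite -cats1 takel_cat // size_tuple leq_addr.
rewrite sumr_const cardT -cardE card_ord -[h _ *+ n]mulr_natl mulrA mulVf ?mul1r //.
by rewrite pnatr_eq0 -lt0n.
Qed.

Lemma E_sq (R : realType) n k (h : seq 'I_n -> R) : (0 < n)%N ->
  expect_hist k h ^+ 2 <= expect_hist k (fun s => h s ^+ 2).
Proof.
move=> n0; have := @avg_sq R _ (fun t : k.-tuple 'I_n => h t).
rewrite card_tuple card_ord expn_gt0 n0 => /(_ isT).
by [].
Qed.

Lemma E_sum (R : realType) n m K (F : 'I_K -> seq 'I_n -> R) :
  expect_hist m (fun s => \sum_(k < K) F k s) = \sum_(k < K) expect_hist m (F k).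
Proof. by rewrite /expect_hist exchange_big mulr_sumr. Qed.

Lemma grad_ineq (R : realType) (d : nat) (f : 'rV[R]_d -> R) (g : 'rV[R]_d -> 'rV[R]_d) x y :
  convex_fun_rV f -> is_gradient f g -> f x + dotp (g x) (y - x) <= f y.
Proof.
move=> cf /(_ x) [df dfE].
have := @diff_derivable _ _ _ f x (y - x) df.
rewrite /derivable => /cvg_ex [l Hl].
have dl : 'D_(y - x) f x = l by exact: cvg_lim.
have : l = dotp (g x) (y - x) by rewrite -dl deriveE // dfE.
move=> <-.
have Hr : (fun h : R => h^-1 *: ((f \o shift x) (h *: (y - x)) - f x)) @ 0^'+ --> l.
  apply: cvg_trans Hl; move=> A /=.
  rewrite /dnbhs /at_right /within /=. 
  rewrite /nbhs /= /fmap /=; apply: filterS => h H hpos; by apply: H; rewrite gt_eqF.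
suff : l <= f y - f x by lra.
apply: (cvgr_to_le Hr).
near=> h.
have h0 : 0 < h by near: h; exact: nbhs_right_gt.
have h1 : h <= 1 by near: h; exact: nbhs_right_le.
rewrite /= -[_ *: _]/(_ * _) ler_pdivrMl //.
have := cf y x h; rewrite (ltW h0) h1 /= => /(_ isT).
rewrite -(addrC x) scalerBr addrA.
have -> : x + h *: y - h *: x = h *: y + (1 - h) *: x.
  by rewrite scalerBl scale1r addrA [x + _]addrC.
lra.
Unshelve. all: by end_near.
Qed.

Lemma one_step (R : realType) d (X : set 'rV[R]_d) (f : 'rV[R]_d -> R)
  (gf : 'rV[R]_d -> 'rV[R]_d) (x y z xs : 'rV[R]_d) (G eta Dm : R) :
  convex_set_rV X -> convex_fun_rV f -> is_gradient f gf -> is_argmin f X y ->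
  (forall x, X x -> enorm (gf x) <= G) -> X x -> 0 < eta -> enorm (y - xs) <= Dm ->
  let t := if gf x == 0 then 0 else (f x - f y) / enorm (gf x) in
  is_argmin (fun w => dotp (gf x) w) (X `&` eball x t) z ->
  dotp (z - xs) (z - xs) <= dotp (x - xs) (x - xs) - (1 - eta) * t ^+ 2 + Dm ^+ 2 / eta
  /\ (f x - f y) ^+ 2 <= G ^+ 2 * t ^+ 2.
Proof.
move=> cX cf gradf [Xy ymin] Gb Xx eta0 Dw t [[Xz zb] zmin].
have fyx : f y <= f x by exact: ymin.
have gi := grad_ineq x y cf gradf.
have ng0 : 0 <= enorm (gf x) by exact: enorm_ge0.
have ngG : enorm (gf x) <= G by exact: Gb.
have [c [c0 [ct [tng B]]]] : exists c, 0 <= c /\ c * enorm (gf x) = t /\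
    t * enorm (gf x) <= dotp (gf x) (x - y) /\ (f x - f y) ^+ 2 <= G ^+ 2 * t ^+ 2.
  rewrite /t; case: eqP => [g0|g0].
    exists 0; rewrite !mul0r; split => //; split => //.
    move: gi; rewrite g0 !dotp0l => gi; split => //.
    have -> : f x - f y = 0 by lra.
    by rewrite !expr2 !mulr0.
  have ngp : 0 < enorm (gf x).
    rewrite lt_neqAle ng0 andbT; apply/eqP => /esym /enorm_eq0; exact: g0.
  exists ((f x - f y) / enorm (gf x) / enorm (gf x)); split.
    by apply: divr_ge0 => //; apply: divr_ge0 => //; lra.
  rewrite divfK ?gt_eqF //; split => //.
  have -> : x - y = - (y - x) by rewrite opprB.
  rewrite dotpNr divfK ?gt_eqF //; split; first lra.
  set a := (f x - f y) / enorm (gf x).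
  have -> : f x - f y = a * enorm (gf x) by rewrite /a divfK // gt_eqF.
  rewrite exprMn [G ^+ 2 * _]mulrC; apply: ler_wpM2l; first exact: sqr_ge0.
  by apply: lerXn2r; rewrite ?nnegrE //; lra.
have uu : dotp (z - x) (z - x) <= t ^+ 2 by exact: (enorm_le zb).
have zmin' : forall w, X w -> enorm (w - x) <= t -> dotp (gf x) z <= dotp (gf x) w.
  by move=> w Xw wb; apply: zmin.
have K1 := key cX Xy Xz c0 ng0 ct (enorm_sq (gf x)) uu zmin' tng.
split => //.
have Dw2 : dotp (y - xs) (y - xs) <= Dm ^+ 2 by exact: enorm_le.
have E1 : z - xs = (y - xs) - (y - z) by apply/matrixP => i j; rewrite !mxE; ring.
have E2 : x - xs = (y - xs) - (y - z) - (z - x) by apply/matrixP => i j; rewrite !mxE; ring.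
rewrite E1 E2; move: K1 uu Dw2; move: (y - xs) (y - z) (z - x) => w v u K1 uu Dw2.
have am := dotp_ge0 (eta *: u - w).
rewrite dotpBl !dotpBr !dotpZl !dotpZr (dotpC w u) in am.
have ww : dotp w w / eta <= Dm ^+ 2 / eta by rewrite ler_pM2r // invr_gt0.
have am2 : 2 * dotp u w <= eta * dotp u u + dotp w w / eta.
  rewrite -(ler_pM2l eta0) mulrDr mulrCA [eta * (_ / eta)]mulrC divfK ?gt_eqF //; nra.
rewrite !dotpBl !dotpBr (dotpC v u) (dotpC w u) (dotpC w v).
have : eta * dotp u u <= eta * t ^+ 2 by rewrite ler_pM2l.
lra.
Qed.


Lemma avgf_convex (R : realType) d n (fs : 'I_n -> 'rV[R]_d -> R) :
  (forall i, convex_fun_rV (fs i)) -> convex_fun_rV (avgf fs).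
Proof.
move=> cf x y a a01; rewrite /avgf.
rewrite mulrCA [(1 - a) * _]mulrCA -mulrDr.
apply: ler_wpM2l; first by rewrite invr_ge0.
rewrite !mulr_sumr -big_split /=; apply: ler_sum => i _; exact: cf.
Qed.

Lemma jensen (R : realType) d (phi : 'rV[R]_d -> R) (p : nat -> 'rV[R]_d) K :
  convex_fun_rV phi -> (0 < K)%N ->
  phi (K%:R^-1 *: \sum_(k < K) p k) <= K%:R^-1 * \sum_(k < K) phi (p k).
Proof.
move=> cp; elim: K => // K IH _.
case: (posnP K) => [->|K0].
  by rewrite !big_ord1 invr1 scale1r mul1r.
rewrite !big_ord_recr /=.
move: (IH K0); move: (\sum_(i < K) p i) (\sum_(i < K) phi (p i)) => S F H.
have Kr : 0 < (K%:R : R) by rewrite ltr0n.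
pose a : R := K%:R / K.+1%:R.
have a01 : 0 <= a <= 1.
  rewrite /a divr_ge0 ?ler0n //= ler_pdivrMr ?ltr0n // mul1r ler_nat; exact: leqnSn.
have E : K.+1%:R^-1 *: (S + p K) = a *: (K%:R^-1 *: S) + (1 - a) *: p K.
  apply/matrixP => i j; rewrite !mxE /a -[K.+1]addn1 natrD; field.
  by apply/andP; split; rewrite gt_eqF // ?addr_gt0 ?ltr01.
rewrite E; apply: le_trans (cp _ _ _ a01) _.
have : a * phi (K%:R^-1 *: S) <= a * (K%:R^-1 * F) by apply: ler_wpM2l; case/andP: a01.
have E2 : a * (K%:R^-1 * F) + (1 - a) * phi (p K) = K.+1%:R^-1 * (F + phi (p K)).
  rewrite /a -[K.+1]addn1 natrD; field.
  by apply/andP; split; rewrite gt_eqF // ?addr_gt0 ?ltr01.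
by move=> H2; rewrite -E2 lerD2r.
Qed.

Lemma le_bigmax_enorm (R : realType) d n (v : 'I_n -> 'rV[R]_d) i :
  enorm (v i) <= \big[Num.max/0]_(j < n) enorm (v j).
Proof. exact: (le_bigmax _ (fun j => enorm (v j))). Qed.

Lemma avg_lin (R : realType) n (A c : R) (b : 'I_n -> R) : (0 < n)%N ->
  n%:R^-1 * \sum_(i < n) (A + c * b i) = A + c * (n%:R^-1 * \sum_(i < n) b i).
Proof.
move=> n0; rewrite big_split /= sumr_const cardT -cardE card_ord -mulr_sumr.
rewrite -[A *+ n]mulr_natl; field; by rewrite pnatr_eq0 -lt0n.
Qed.


Lemma main_thm (R : realType) (d n : nat) (X : set 'rV[R]_d)
  (fs : 'I_n -> 'rV[R]_d -> R) (gs : 'I_n -> 'rV[R]_d -> 'rV[R]_d)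
  (xstar : 'rV[R]_d) (xsi : 'I_n -> 'rV[R]_d) (G : R) (x0 : 'rV[R]_d)
  (traj : seq 'I_n -> 'rV[R]_d) (eta : R) (K : nat) :
  (0 < n)%N ->
  X !=set0 -> closed X -> convex_set_rV X ->
  (forall i, convex_fun_rV (fs i)) ->
  (forall i, is_gradient (fs i) (gs i)) ->
  is_argmin (avgf fs) X xstar ->
  (forall i, is_argmin (fs i) X (xsi i)) ->
  (forall i x, X x -> enorm (gs i x) <= G) ->
  X x0 ->
  valid_run X fs gs xsi x0 traj ->
  0 < eta < 1 -> (1 <= K)%N ->
  let D := \big[Num.max/0]_(i < n) enorm (xsi i - xstar) in
  let bound := G ^+ 2 * enorm (x0 - xstar) ^+ 2 / ((1 - eta) * K%:R)
               + G ^+ 2 * D ^+ 2 / (eta * (1 - eta)) in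
  K%:R^-1 * \sum_(k < K)
      expect_hist k (fun s => (avgf fs (traj s) - avgf fs xstar) ^+ 2) <= bound
  /\
  expect_hist K (fun s => avgf fs (avg_iterate traj K s) - avgf fs xstar)
    <= Num.sqrt bound.
Proof.
move=> n0 _ _ cX cf gradf [Xs smin] xsim Gb Xx0 vr /andP[eta0 eta1] K1 D bound.
have Xtraj : forall s, X (traj s).
  case: vr => [t0 Hv]; elim/last_ind => [|s i _]; first by rewrite t0.
  by case: (Hv s i) => [[]].
have Dbound : forall i, enorm (xsi i - xstar) <= D.
  by move=> i; exact: (le_bigmax_enorm (fun j => xsi j - xstar)).
pose fstar := avgf fs xstar.
pose W := fun s => dotp (traj s - xstar) (traj s - xstar).
pose ts := fun s (i : 'I_n) => step_size fs gs xsi i (traj s).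
pose T := fun s => n%:R^-1 * \sum_(i < n) ts s i ^+ 2.
pose rho := D ^+ 2 / eta.
have step : forall s i, W (rcons s i) <= W s - (1 - eta) * ts s i ^+ 2 + rho /\
    (fs i (traj s) - fs i (xsi i)) ^+ 2 <= G ^+ 2 * ts s i ^+ 2.
  move=> s i; case: vr => [_ Hv].
  exact: (one_step cX (cf i) (gradf i) (xsim i) (Gb i) (Xtraj s) eta0 (Dbound i) (Hv s i)).
have stepW : forall s, n%:R^-1 * \sum_(i < n) W (rcons s i)
    <= (W s + (- (1 - eta)) * T s) + rho.
  move=> s.
  have : n%:R^-1 * \sum_(i < n) W (rcons s i) <=
         n%:R^-1 * \sum_(i < n) ((W s + rho) + (- (1 - eta)) * ts s i ^+ 2).
    apply: ler_wpM2l; first by rewrite invr_ge0.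
    apply: ler_sum => i _; have [H _] := step s i; lra.
  rewrite avg_lin // /T; lra.
have gap : forall s, (avgf fs (traj s) - fstar) ^+ 2 <= G ^+ 2 * T s.
  move=> s; set x := traj s.
  have e0 : 0 <= avgf fs x - fstar by rewrite subr_ge0; exact: (smin _ (Xtraj s)).
  have e1 : avgf fs x - fstar <= n%:R^-1 * \sum_(i < n) (fs i x - fs i (xsi i)).
    rewrite /fstar /avgf -mulrBr; apply: ler_wpM2l; first by rewrite invr_ge0.
    rewrite -sumrB; apply: ler_sum => i _.
    have := (xsim i).2 xstar Xs; lra.
  have := avg_sq (fun i => fs i x - fs i (xsi i)); rewrite card_ord => /(_ n0) H.
  have H2 : n%:R^-1 * \sum_(i < n) (fs i x - fs i (xsi i)) ^+ 2 <= G ^+ 2 * T s.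
    rewrite /T mulrCA; apply: ler_wpM2l; first by rewrite invr_ge0.
    rewrite mulr_sumr.
    by apply: ler_sum => i _; have [_ H3] := step s i.
  have : (avgf fs x - fstar) ^+ 2 <=
         (n%:R^-1 * \sum_(i < n) (fs i x - fs i (xsi i))) ^+ 2.
    by apply: lerXn2r; rewrite ?nnegrE //; lra.
  lra.
pose a := fun k => expect_hist k W.
pose b := fun k => expect_hist k T.
have rec : forall k, a k.+1 <= a k + (- (1 - eta)) * b k + rho.
  move=> k; rewrite /a E_rcons //.
  apply: le_trans (@E_le _ _ k _ (fun s => W s + (- (1 - eta)) * T s + rho) (fun t => stepW t)) _.
  have := E_add k (fun s => W s + (- (1 - eta)) * T s) (fun _ => rho); rewrite /= => ->.
  have := E_add k W (fun s => (- (1 - eta)) * T s); rewrite /= => ->.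
  by rewrite E_scale E_const.
have sumrec : forall m, a m + (1 - eta) * \sum_(k < m) b k <= a 0%N + m%:R * rho.
  elim => [|m IH]; first by rewrite big_ord0 mulr0 addr0 mul0r addr0.
  rewrite big_ord_recr /= -natr1; have := rec m; lra.
have a_ge0 : forall k, 0 <= a k by move=> k; apply: E_ge0 => t; exact: dotp_ge0.
have a0E : a 0%N = enorm (x0 - xstar) ^+ 2.
  by rewrite /a E_nil // /W; case: vr => -> _; rewrite enorm_sq.
have P1 : K%:R^-1 * \sum_(k < K)
      expect_hist k (fun s => (avgf fs (traj s) - avgf fs xstar) ^+ 2) <= bound.
  have Kr : 0 < (K%:R : R) by rewrite ltr0n.
  apply: (@le_trans _ _ (K%:R^-1 * (G ^+ 2 * \sum_(k < K) b k))).
    apply: ler_wpM2l; first by rewrite invr_ge0.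
    rewrite mulr_sumr; apply: ler_sum => k _; rewrite /b -E_scale.
    exact: E_le.
  have Sb : \sum_(k < K) b k <= (a 0%N + K%:R * rho) / (1 - eta).
    rewrite ler_pdivlMr ?subr_gt0 // mulrC; have := sumrec K; have := a_ge0 K; lra.
  apply: le_trans (ler_wpM2l _ (ler_wpM2l _ Sb)) _; rewrite ?invr_ge0 ?sqr_ge0 //.
  rewrite a0E /bound /rho le_eqVlt; apply/orP; left; apply/eqP; field.
  by rewrite !gt_eqF ?subr_gt0.
split => //.
pose e := fun s => avgf fs (traj s) - fstar.
pose Y := fun s : seq 'I_n => K%:R^-1 * \sum_(k < K) e (take k s).
have Kr : 0 < (K%:R : R) by rewrite ltr0n.
have e_ge0 : forall s, 0 <= e s by move=> s; rewrite /e subr_ge0; exact: (smin _ (Xtraj s)).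
have ZY : forall s, avgf fs (avg_iterate traj K s) - avgf fs xstar <= Y s.
  move=> s; rewrite /avg_iterate.
  have := jensen (fun k => traj (take k s)) (avgf_convex cf) K1.
  have -> : Y s = K%:R^-1 * \sum_(k < K) avgf fs (traj (take k s)) - fstar.
    rewrite /Y /e sumrB sumr_const cardT -cardE card_ord -[fstar *+ K]mulr_natl.
    by field; rewrite gt_eqF.
  rewrite /fstar; lra.
have Y0 : 0 <= expect_hist K Y.
  apply: E_ge0 => t; apply: mulr_ge0; first by rewrite invr_ge0 ltW.
  by apply: sumr_ge0 => k _.
have EY2 : expect_hist K Y ^+ 2 <= bound.
  apply: le_trans (E_sq K Y n0) _.
  apply: (@le_trans _ _ (expect_hist K (fun s => K%:R^-1 * \sum_(k < K) e (take k s) ^+ 2))).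
    apply: E_le => t; have := avg_sq (fun k : 'I_K => e (take k t)).
    by rewrite card_ord => /(_ K1).
  have := E_scale K (K%:R^-1) (fun s => \sum_(k < K) e (take k s) ^+ 2).
  rewrite /= => ->.
  have := E_sum K (fun (k : 'I_K) s => e (take k s) ^+ 2); rewrite /= => ->.
  suff -> : \sum_(k < K) expect_hist K (fun s => e (take k s) ^+ 2) =
     \sum_(k < K) expect_hist k (fun s => (avgf fs (traj s) - avgf fs xstar) ^+ 2).
    exact: P1.
  apply: eq_bigr => k _.
  have := @E_take R n k (K - k) (fun s => e s ^+ 2) n0.
  by rewrite subnKC; [move=> H; exact: H | exact: ltnW].
have b0 : 0 <= bound by apply: le_trans EY2; exact: sqr_ge0.
apply: le_trans (E_le ZY) _.
by rewrite -(ger0_norm Y0) -sqrtr_sqr ler_sqrt.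
Qed.

Unset Implicit Arguments. Set Strict Implicit.

Theorem theorem11 (R : realType) (d n : nat) (X : set 'rV[R]_d)
  (fs : 'I_n -> 'rV[R]_d -> R) (gs : 'I_n -> 'rV[R]_d -> 'rV[R]_d)
  (xstar : 'rV[R]_d) (xsi : 'I_n -> 'rV[R]_d) (G : R) (x0 : 'rV[R]_d)
  (traj : seq 'I_n -> 'rV[R]_d) (eta : R) (K : nat) :
  (0 < n)%N ->
  X !=set0 -> closed X -> convex_set_rV X ->
  (forall i, convex_fun_rV (fs i)) ->
  (forall i, is_gradient (fs i) (gs i)) ->
  is_argmin (avgf fs) X xstar ->
  (forall i, is_argmin (fs i) X (xsi i)) ->
  (forall i x, X x -> enorm (gs i x) <= G) ->
  X x0 ->
  valid_run X fs gs xsi x0 traj ->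
  0 < eta < 1 -> (1 <= K)%N ->
  let D := \big[Num.max/0]_(i < n) enorm (xsi i - xstar) in
  let bound := G ^+ 2 * enorm (x0 - xstar) ^+ 2 / ((1 - eta) * K%:R)
               + G ^+ 2 * D ^+ 2 / (eta * (1 - eta)) in
  K%:R^-1 * \sum_(k < K)
      expect_hist k (fun s => (avgf fs (traj s) - avgf fs xstar) ^+ 2) <= bound
  /\
  expect_hist K (fun s => avgf fs (avg_iterate traj K s) - avgf fs xstar)
    <= Num.sqrt bound.
Proof. exact (@main_thm R d n X fs gs xstar xsi G x0 traj eta K). Qed.
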